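(* Let $E$ be a symmetric operator defined on a dense domain $\mathcal D$ of a Hilbert space $\mathcal H$. Let $\mathbf d=\{d_i\}_{i\in\mathbb N}$ and $\boldsymbol\lambda=\{\lambda_i\}_{i\in\mathbb N}$ be nondecreasing unbounded real sequences with $d_i\ge\lambda_i$ for every $i$. If there exists an orthonormal sequence $\{f_i\}_{i\in\mathbb N}\subset\mathcal D$ such that $\langle Ef_i,f_i\rangle=\lambda_i$ for all $i$, then there exists an orthonormal sequence $\{e_i\}_{i\in\mathbb N}$, each element of which lies in the (algebraic) linear span of $\{f_i\}_{i\in\mathbb N}$, such that $\overline{\operatorname{span}}\{e_i\}=\overline{\operatorname{span}}\{f_i\}$ and $\langle Ee_i,e_i\rangle=d_i$ for all $i\in\mathbb N$.
   Context: $E$ symmetric means $\langle Ef,g\rangle=\langle f,Eg\rangle$ for all $f,g\in\mathcal D$. $\overline{\operatorname{span}}$ is the closed linear span. *)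

(* Defs.v *)
From mathcomp Require Import all_boot all_order all_algebra.
From mathcomp Require Import reals complex.
Set Implicit Arguments. Unset Strict Implicit. Unset Printing Implicit Defensive.
Import Order.TTheory GRing.Theory Num.Theory.
Local Open Scope ring_scope.

Section Hilbert.
Variables (R : realType) (V : lmodType R[i]).
Implicit Types (ip : V -> V -> R[i]).

Definition hnorm ip (x : V) : R := Num.sqrt (complex.Re (ip x x)).

Definition hcauchy ip (u : nat -> V) : Prop :=
  forall eps : R, 0 < eps -> exists N : nat,
    forall m n : nat, (N <= m)%N -> (N <= n)%N -> hnorm ip (u m - u n) < eps.

Definition hconverges ip (u : nat -> V) : Prop :=
  exists x : V, forall eps : R, 0 < eps -> exists N : nat,
    forall n : nat, (N <= n)%N -> hnorm ip (u n - x) < eps.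

Definition is_hilbert ip : Prop :=
  [/\ (forall (a : R[i]) (x y z : V), ip (a *: x + y) z = a * ip x z + ip y z),
      (forall x y : V, ip x y = Num.conj (ip y x)),
      (forall x : V, 0 <= ip x x),
      (forall x : V, ip x x = 0 -> x = 0)
    & (forall u : nat -> V, hcauchy ip u -> hconverges ip u)].

Definition dense_subspace ip (D : V -> Prop) : Prop :=
  [/\ D 0,
      (forall (a : R[i]) (x y : V), D x -> D y -> D (a *: x + y))
    & (forall (x : V) (eps : R), 0 < eps -> exists y : V, D y /\ hnorm ip (x - y) < eps)].

Definition symmetric_operator ip (D : V -> Prop) (E : V -> V) : Prop :=
  (forall (a : R[i]) (x y : V), D x -> D y -> E (a *: x + y) = a *: E x + E y) /\
  (forall f g : V, D f -> D g -> ip (E f) g = ip f (E g)).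

Definition orthonormal_seq ip (f : nat -> V) : Prop :=
  forall i j : nat, ip (f i) (f j) = (if i == j then 1 else 0).

Definition in_span (f : nat -> V) (x : V) : Prop :=
  exists (n : nat) (c : nat -> R[i]), x = \sum_(k < n) c k *: f k.

Definition in_cspan ip (f : nat -> V) (x : V) : Prop :=
  forall eps : R, 0 < eps -> exists y : V, in_span f y /\ hnorm ip (x - y) < eps.

End Hilbert.

Definition nondecreasing_seq (R : realType) (u : nat -> R) : Prop :=
  forall i j : nat, (i <= j)%N -> u i <= u j.

Definition unbounded_seq (R : realType) (u : nat -> R) : Prop :=
  forall M : R, exists i : nat, M < u i.

(* Main.v *)
Require Import Defs.
From mathcomp Require Import all_boot all_order all_algebra.
From mathcomp Require Import reals complex ring lra zify.
Set Implicit Arguments. Unset Strict Implicit. Unset Printing Implicit Defensive.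
Import Order.TTheory GRing.Theory Num.Theory.
Local Open Scope ring_scope.
Local Open Scope complex_scope.

Section Rot.
Variable R : realType.

Definition between (a c b : R) := (a <= c <= b) || (b <= c <= a).

Lemma conjR (x : R) : Num.conj (x%:C) = x%:C.
Proof. exact: conjc_real. Qed.

Definition omg (z : R[i]) : R[i] := if z == 0 then 1 else 'i * z / `|z|.

Lemma omgN (z : R[i]) : omg z * Num.conj (omg z) = 1.
Proof.
rewrite /omg; case: eqP => [_|/eqP z0]; first by rewrite rmorph1 mulr1.
have nz : `|z| != 0 by rewrite normr_eq0.
rewrite !rmorphM /= conjCi fmorphV /= conj_normC.
have h1 : z * Num.conj z = `|z| ^+ 2 by rewrite normCK.
have h2 : 'i * 'i = -1 :> R[i] by rewrite -expr2 sqrCi.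
have -> : 'i * z / `|z| * (- 'i * Num.conj z / `|z|) = - ('i * 'i) * (z * Num.conj z) / (`|z| ^+ 2) by field.
rewrite h1 h2 opprK mul1r divff //. by rewrite expf_neq0.
Qed.

Lemma omgZ (z : R[i]) : Num.conj (omg z) * z + omg z * Num.conj z = 0.
Proof.
rewrite /omg; case: eqP => [->|/eqP z0]; first by rewrite rmorph0 !mulr0 addr0.
have nz : `|z| != 0 by rewrite normr_eq0.
rewrite !rmorphM /= conjCi fmorphV /= conj_normC.
field. exact nz.
Qed.
End Rot.


Section Rot2.
Variable R : realType.

Definition ca (a b c : R) : R[i] := if a == b then 1 else (Num.sqrt ((b-c)/(b-a)))%:C.
Definition cb (a b c : R) (z : R[i]) : R[i] :=
  if a == b then 0 else (Num.sqrt ((c-a)/(b-a)))%:C * omg z.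

Lemma between_ratio (a b c : R) : between a c b -> a != b ->
  0 <= (b-c)/(b-a) /\ 0 <= (c-a)/(b-a).
Proof.
move=> /orP [/andP [h1 h2]|/andP [h1 h2]] hab.
  have hb : 0 < b - a by rewrite subr_gt0 lt_neqAle hab (le_trans h1 h2).
  by split; apply: divr_ge0; lra.
have hb : b - a < 0 by rewrite subr_lt0 lt_neqAle eq_sym hab (le_trans h1 h2).
split; rewrite -mulrNN -invrN; apply: mulr_ge0; rewrite ?invr_ge0; lra.
Qed.

Lemma rcoefN (a b c : R) z : between a c b ->
  ca a b c * Num.conj (ca a b c) + cb a b c z * Num.conj (cb a b c z) = 1.
Proof.
move=> hb; rewrite /ca /cb; case: eqP => [_|/eqP hab].
  by rewrite rmorph1 rmorph0 mulr1 mulr0 addr0.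
have [hp hq] := between_ratio hb hab.
rewrite rmorphM /= !conjR.
have -> : (Num.sqrt ((c - a) / (b - a)))%:C * omg z *
   ((Num.sqrt ((c - a) / (b - a)))%:C * Num.conj (omg z)) =
   ((Num.sqrt ((c - a) / (b - a)))^+2)%:C * (omg z * Num.conj (omg z)).
  by rewrite rmorphXn /=; ring.
rewrite omgN mulr1 -rmorphM /= -expr2 !sqr_sqrtr // -rmorphD /=.
congr (_%:C).
have hba : b - a != 0 by rewrite subr_eq0 eq_sym.
by field.
Qed.

Lemma rcoefQ (a b c : R) z : between a c b ->
  ca a b c * Num.conj (ca a b c) * a%:C + ca a b c * Num.conj (cb a b c z) * z
  + cb a b c z * Num.conj (ca a b c) * Num.conj z
  + cb a b c z * Num.conj (cb a b c z) * b%:C = c%:C.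
Proof.
move=> hb; rewrite /ca /cb; case: eqP => [hab|/eqP hab].
  rewrite rmorph1 rmorph0 !mulr1 !mulr0 !mul0r !addr0 mul1r.
  move: hb; rewrite /between -hab => /orP [] /andP [h1 h2];
  by congr (_%:C); apply/eqP; rewrite eq_le h1 h2.
have [hp hq] := between_ratio hb hab.
rewrite rmorphM /= !conjR.
set S := Num.sqrt _; set T := Num.sqrt _.
have e : S%:C * S%:C * a%:C + S%:C * (T%:C * Num.conj (omg z)) * z +
  T%:C * omg z * S%:C * Num.conj z + T%:C * omg z * (T%:C * Num.conj (omg z)) * b%:C
  = (S^+2 * a + T^+2 * b)%:C + (S * T)%:C * (Num.conj (omg z) * z + omg z * Num.conj z)
    + ((T ^+2)%:C * b%:C) * (omg z * Num.conj (omg z) - 1).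
  rewrite !expr2 !rmorphD !rmorphM /=. ring.
rewrite e omgZ omgN subrr !mulr0 !addr0 !sqr_sqrtr //.
congr (_%:C).
have hba : b - a != 0 by rewrite subr_eq0 eq_sym.
by field.
Qed.
End Rot2.


Section Vec.
Variables (R : realType) (V : lmodType R[i]) (ip : V -> V -> R[i]) (D : V -> Prop) (E : V -> V).
Hypothesis ipL : forall a x y z, ip (a *: x + y) z = a * ip x z + ip y z.
Hypothesis ipC : forall x y, ip x y = Num.conj (ip y x).
Hypothesis D0 : D 0.
Hypothesis DL : forall a x y, D x -> D y -> D (a *: x + y).
Hypothesis EL : forall a x y, D x -> D y -> E (a *: x + y) = a *: E x + E y.
Hypothesis ES : forall f g, D f -> D g -> ip (E f) g = ip f (E g).

Lemma dbl0 (W : zmodType) (x : W) : x = x + x -> x = 0.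
Proof. by move=> h; rewrite -[LHS](addrK x) -h subrr. Qed.

Lemma ip0l z : ip 0 z = 0.
Proof.
by apply: dbl0; have := ipL 1 0 0 z; rewrite scale1r addr0 mul1r.
Qed.
Lemma ipDl x y z : ip (x + y) z = ip x z + ip y z.
Proof. by have := ipL 1 x y z; rewrite scale1r mul1r. Qed.
Lemma ipZl a x z : ip (a *: x) z = a * ip x z.
Proof. by have := ipL a x 0 z; rewrite addr0 ip0l addr0. Qed.
Lemma ipDr x y z : ip z (x + y) = ip z x + ip z y.
Proof. by rewrite ipC ipDl rmorphD /= -!ipC. Qed.
Lemma ipZr a x z : ip z (a *: x) = Num.conj a * ip z x.
Proof. by rewrite ipC ipZl rmorphM /= -ipC. Qed.
Lemma ip0r z : ip z 0 = 0.
Proof. by rewrite ipC ip0l rmorph0. Qed.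

Lemma DD x y : D x -> D y -> D (x + y).
Proof. by move=> hx hy; have := DL 1 hx hy; rewrite scale1r. Qed.
Lemma DZ a x : D x -> D (a *: x).
Proof. by move=> hx; have := DL a hx D0; rewrite addr0. Qed.
Lemma E0 : E 0 = 0.
Proof.
by apply: dbl0; have := EL 1 D0 D0; rewrite !scale1r addr0.
Qed.
Lemma ED x y : D x -> D y -> E (x + y) = E x + E y.
Proof. by move=> hx hy; have := EL 1 hx hy; rewrite !scale1r. Qed.
Lemma EZ a x : D x -> E (a *: x) = a *: E x.
Proof. by move=> hx; have := EL a hx D0; rewrite !addr0 E0 addr0. Qed.

Lemma ip2 u v a b c d : ip u u = 1 -> ip v v = 1 -> ip u v = 0 ->
  ip (a *: u + b *: v) (c *: u + d *: v) = a * Num.conj c + b * Num.conj d.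
Proof.
move=> uu vv uv; have vu : ip v u = 0 by rewrite ipC uv rmorph0.
by rewrite !ipDl !ipDr !ipZl !ipZr uu vv uv vu; ring.
Qed.

Lemma ipE2 u v a b c d : D u -> D v ->
  ip (E (a *: u + b *: v)) (c *: u + d *: v) =
  a * Num.conj c * ip (E u) u + a * Num.conj d * ip (E u) v
  + b * Num.conj c * Num.conj (ip (E u) v) + b * Num.conj d * ip (E v) v.
Proof.
move=> hu hv; have e : ip (E v) u = Num.conj (ip (E u) v).
  by rewrite ES // ipC -ES.
rewrite ED; [|exact: DZ|exact: DZ]. rewrite !EZ // !ipDl !ipDr !ipZl !ipZr e; ring.
Qed.

Lemma ip2o u v w a b : ip u w = 0 -> ip v w = 0 -> ip (a *: u + b *: v) w = 0.
Proof. by move=> h1 h2; rewrite ipDl !ipZl h1 h2 !mulr0 addr0. Qed.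
Lemma ip2o' u v w a b : ip w u = 0 -> ip w v = 0 -> ip w (a *: u + b *: v) = 0.
Proof. by move=> h1 h2; rewrite ipDr !ipZr h1 h2 !mulr0 addr0. Qed.

Definition step (dl : nat -> R) (g : nat -> V) (p q : nat) (c : R) : nat -> V :=
  let al := ca (dl p) (dl q) c in
  let be := cb (dl p) (dl q) c (ip (E (g p)) (g q)) in
  fun i => if p == q then g i else if i == p then al *: g p + be *: g q
   else if i == q then (- Num.conj be) *: g p + Num.conj al *: g q else g i.

Definition dstep (dl : nat -> R) (p q : nat) (c : R) : nat -> R :=
  fun i => if p == q then dl i else if i == p then c
   else if i == q then dl p + dl q - c else dl i.

Definition good (dl : nat -> R) (g : nat -> V) :=
  [/\ orthonormal_seq ip g, forall i, D (g i) & forall i, ip (E (g i)) (g i) = (dl i)%:C].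

Lemma step_good dl g p q c : good dl g -> (p != q -> between (dl p) c (dl q)) ->
  good (dstep dl p q c) (step dl g p q c).
Proof.
move=> [on inD dg] hb.
have [<-|pq] := eqVneq p q.
  by rewrite /step /dstep eqxx; split.
have {}hb := hb pq.
set al := ca (dl p) (dl q) c; set be := cb (dl p) (dl q) c (ip (E (g p)) (g q)).
have sp : step dl g p q c p = al *: g p + be *: g q by rewrite /step (negbTE pq) eqxx.
have sq : step dl g p q c q = (- Num.conj be) *: g p + Num.conj al *: g q.
  by rewrite /step (negbTE pq) eq_sym (negbTE pq) eqxx.
have so k : k != p -> k != q -> step dl g p q c k = g k.
  by move=> kp kq; rewrite /step (negbTE pq) (negbTE kp) (negbTE kq).
have dp : dstep dl p q c p = c by rewrite /dstep (negbTE pq) eqxx.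
have dq : dstep dl p q c q = dl p + dl q - c.
  by rewrite /dstep (negbTE pq) eq_sym (negbTE pq) eqxx.
have dso k : k != p -> k != q -> dstep dl p q c k = dl k.
  by move=> kp kq; rewrite /dstep (negbTE pq) (negbTE kp) (negbTE kq).
have N := rcoefN (ip (E (g p)) (g q)) hb; rewrite -/al -/be in N.
have Q := rcoefQ (ip (E (g p)) (g q)) hb; rewrite -/al -/be in Q.
have uu : ip (g p) (g p) = 1 by rewrite on eqxx.
have vv : ip (g q) (g q) = 1 by rewrite on eqxx.
have uv : ip (g p) (g q) = 0 by rewrite on (negbTE pq).
have oth k : k != p -> k != q -> (ip (g k) (g p) = 0 /\ ip (g k) (g q) = 0)
    /\ (ip (g p) (g k) = 0 /\ ip (g q) (g k) = 0).
  move=> kp kq; rewrite !on (negbTE kp) (negbTE kq) eq_sym (negbTE kp).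
  by rewrite eq_sym (negbTE kq).
split.
- move=> i j.
  have [->|ip_] := eqVneq i p.
    have [->|jp] := eqVneq j p; first by rewrite sp ip2 // N eqxx.
    have [->|jq] := eqVneq j q.
      by rewrite sp sq ip2 // conjCK rmorphN /= conjCK; ring.
    have [_ [h1 h2]] := oth j jp jq.
    by rewrite sp so // ip2o.
  have [->|iq] := eqVneq i q.
    have [->|jp] := eqVneq j p.
      by rewrite sp sq ip2 // ?rmorphN /= ?conjCK eq_sym (negbTE pq); ring.
    have [->|jq] := eqVneq j q.
      by rewrite sq ip2 // ?rmorphN /= ?conjCK -N; ring.
    have [_ [h1 h2]] := oth j jp jq.
    by rewrite sq so // ip2o.
  rewrite (so i ip_ iq).
  have [->|jp] := eqVneq j p.
    have [[h1 h2] _] := oth i ip_ iq.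
    by rewrite (negbTE ip_) sp ip2o'.
  have [->|jq] := eqVneq j q.
    have [[h1 h2] _] := oth i ip_ iq.
    by rewrite (negbTE iq) sq ip2o'.
  by rewrite so // on.
- move=> i; have [->|ip_] := eqVneq i p; first by rewrite sp; apply: DL => //; apply: DZ.
  have [->|iq] := eqVneq i q; first by rewrite sq; apply: DL => //; apply: DZ.
  by rewrite so.
- move=> i; have [->|ip_] := eqVneq i p.
    by rewrite sp dp ipE2 // !dg -Q; ring.
  have [->|iq] := eqVneq i q; last by rewrite so // dso.
  rewrite sq dq ipE2 // !dg rmorphN /= !conjCK rmorphB rmorphD /= -Q.
  set z := ip (E (g p)) (g q).
  have e : - Num.conj be * - be * (dl p)%:C + - Num.conj be * al * z +
     Num.conj al * - be * Num.conj z + Num.conj al * al * (dl q)%:C =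
     ((dl p)%:C + (dl q)%:C) * (al * Num.conj al + be * Num.conj be) -
    (al * Num.conj al * (dl p)%:C + al * Num.conj be * z +
     be * Num.conj al * Num.conj z + be * Num.conj be * (dl q)%:C) by ring.
  by rewrite e N mulr1.
Qed.
End Vec.


Section Span.
Variables (R : realType) (V : lmodType R[i]).

Definition spanM (M : nat) (g : nat -> V) (x : V) :=
  exists c : nat -> R[i], x = \sum_(k < M) c k *: g k.

Lemma spanM0 M g : spanM M g 0.
Proof. by exists (fun _ => 0); rewrite big1 // => k _; rewrite scale0r. Qed.

Lemma spanM_gen M g k : (k < M)%N -> spanM M g (g k).
Proof.
move=> kM; exists (fun j => if j == k then 1 else 0).
rewrite (bigD1 (Ordinal kM)) //= eqxx scale1r big1 ?addr0 // => j /eqP jk.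
case: eqP => [e|_]; last by rewrite scale0r.
by exfalso; apply: jk; apply: val_inj.
Qed.

Lemma spanM_lin M g a x y : spanM M g x -> spanM M g y -> spanM M g (a *: x + y).
Proof.
move=> [c ->] [c' ->]; exists (fun k => a * c k + c' k).
rewrite scaler_sumr -big_split /=; apply: eq_bigr => k _.
by rewrite scalerDl scalerA.
Qed.

Lemma spanM_add M g x y : spanM M g x -> spanM M g y -> spanM M g (x + y).
Proof. by move=> hx hy; have := spanM_lin 1 hx hy; rewrite scale1r. Qed.
Lemma spanM_scale M g a x : spanM M g x -> spanM M g (a *: x).
Proof. by move=> hx; have := spanM_lin a hx (spanM0 M g); rewrite addr0. Qed.

Lemma spanM_sum M g n (c : nat -> R[i]) (h : nat -> V) :
  (forall k, (k < n)%N -> spanM M g (h k)) -> spanM M g (\sum_(k < n) c k *: h k).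
Proof.
elim: n => [|n IH] H; first by rewrite big_ord0; apply: spanM0.
rewrite big_ord_recr /=; apply: spanM_add; first by apply: IH => k kn; apply: H; lia.
by apply: spanM_scale; apply: H.
Qed.

Lemma spanM_trans M M' g h x : (forall k, (k < M)%N -> spanM M' g (h k)) ->
  spanM M h x -> spanM M' g x.
Proof. by move=> H [c ->]; apply: spanM_sum. Qed.

Lemma spanM_mono M M' g x : (M <= M')%N -> spanM M g x -> spanM M' g x.
Proof. by move=> le; apply: spanM_trans => k kM; apply: spanM_gen; lia. Qed.

Lemma spanM_ext M g h x : (forall k, (k < M)%N -> g k = h k) -> spanM M g x -> spanM M h x.
Proof. by move=> H; apply: spanM_trans => k kM; rewrite H //; apply: spanM_gen. Qed.

Lemma in_spanE (g : nat -> V) x : in_span g x <-> exists M, spanM M g x.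
Proof. by split; move=> [M [c e]]; exists M, c. Qed.

Lemma in_span_gen (g : nat -> V) k : in_span g (g k).
Proof. by apply/in_spanE; exists k.+1; apply: spanM_gen. Qed.

Lemma in_span_lin (g : nat -> V) a x y : in_span g x -> in_span g y -> in_span g (a *: x + y).
Proof.
move=> /in_spanE [M hx] /in_spanE [M' hy]; apply/in_spanE; exists (maxn M M').
by apply: spanM_lin; apply: spanM_mono hx || apply: spanM_mono hy; lia.
Qed.

Lemma in_span_trans (g h : nat -> V) x : (forall k, in_span g (h k)) -> in_span h x -> in_span g x.
Proof.
move=> H /in_spanE [M [c ->]].
elim: M c => [|M IH] c; first by rewrite big_ord0; apply/in_spanE; exists 0%N; apply: spanM0.
rewrite big_ord_recr /= addrC; apply: in_span_lin; first exact: H.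
exact: IH.
Qed.
End Span.


Section Proc.
Variables (R : realType) (V : lmodType R[i]) (ip : V -> V -> R[i]) (D : V -> Prop) (E : V -> V).
Hypothesis ipL : forall a x y z, ip (a *: x + y) z = a * ip x z + ip y z.
Hypothesis ipC : forall x y, ip x y = Num.conj (ip y x).
Hypothesis D0 : D 0.
Hypothesis DL : forall a x y, D x -> D y -> D (a *: x + y).
Hypothesis EL : forall a x y, D x -> D y -> E (a *: x + y) = a *: E x + E y.
Hypothesis ES : forall f g, D f -> D g -> ip (E f) g = ip f (E g).

Notation stp := (step ip E).
Notation gd := (good ip D E).

Lemma step_other dl g p q c i : i != p -> i != q -> stp dl g p q c i = g i.
Proof. by move=> h1 h2; rewrite /step (negbTE h1) (negbTE h2); case: ifP. Qed.
Lemma dstep_other (dl : nat -> R) p q c i : i != p -> i != q -> dstep dl p q c i = dl i.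
Proof. by move=> h1 h2; rewrite /dstep (negbTE h1) (negbTE h2); case: ifP. Qed.

Lemma in_span2 (g : nat -> V) a b p q : in_span g (a *: g p + b *: g q).
Proof.
apply: in_span_lin; first exact: in_span_gen.
rewrite -[_ *: g q]addr0; apply: in_span_lin; first exact: in_span_gen.
by apply/in_spanE; exists 0%N; apply: spanM0.
Qed.

Lemma step_span dl g p q c i : in_span g (stp dl g p q c i).
Proof.
rewrite /step; case: ifP => _; first exact: in_span_gen.
case: ifP => _; first exact: in_span2.
case: ifP => _; last exact: in_span_gen.
exact: in_span2.
Qed.

Lemma step_back dl g p q c M : p != q -> between (dl p) c (dl q) ->
  (p < M)%N -> (q < M)%N -> forall k, (k < M)%N -> spanM M (stp dl g p q c) (g k).
Proof.
move=> pq hb pM qM k kM.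
set al := ca (dl p) (dl q) c; set be := cb (dl p) (dl q) c (ip (E (g p)) (g q)).
have N := rcoefN (ip (E (g p)) (g q)) hb; rewrite -/al -/be in N.
have sp : stp dl g p q c p = al *: g p + be *: g q by rewrite /step (negbTE pq) eqxx.
have sq : stp dl g p q c q = (- Num.conj be) *: g p + Num.conj al *: g q.
  by rewrite /step (negbTE pq) eq_sym (negbTE pq) eqxx.
have [->|kp] := eqVneq k p.
  have -> : g p = Num.conj al *: stp dl g p q c p + (- be) *: stp dl g p q c q.
    rewrite sp sq !scalerDr !scalerA addrACA -!scalerDl.
    have -> : Num.conj al * al + - be * - Num.conj be = 1 by rewrite -N; ring.
    have -> : Num.conj al * be + - be * Num.conj al = 0 by ring.
    by rewrite scale1r scale0r addr0.
  by apply: spanM_lin; last apply: spanM_scale; apply: spanM_gen.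
have [->|kq] := eqVneq k q.
  have -> : g q = Num.conj be *: stp dl g p q c p + al *: stp dl g p q c q.
    rewrite sp sq !scalerDr !scalerA addrACA -!scalerDl.
    have -> : Num.conj be * al + al * - Num.conj be = 0 by ring.
    have -> : Num.conj be * be + al * Num.conj al = 1 by rewrite -N; ring.
    by rewrite scale1r scale0r add0r.
  by apply: spanM_lin; last apply: spanM_scale; apply: spanM_gen.
by rewrite -(step_other dl g c kp kq); apply: spanM_gen.
Qed.

Fixpoint pst (P Q : nat -> nat) (C : nat -> R) (dl0 : nat -> R) (g0 : nat -> V) (t : nat)
  : (nat -> R) * (nat -> V) :=
  match t with
  | 0 => (dl0, g0)
  | t'.+1 => let s := pst P Q C dl0 g0 t' in
      (dstep s.1 (P t') (Q t') (C t'), stp s.1 s.2 (P t') (Q t') (C t'))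
  end.

Lemma pd_untouched P Q C dl0 g0 i t t' : (t <= t')%N ->
  (forall s, (t <= s)%N -> (s < t')%N -> i != P s /\ i != Q s) ->
  (pst P Q C dl0 g0 t').1 i = (pst P Q C dl0 g0 t).1 i.
Proof.
elim: t' => [|t' IH] le H; first by have -> : t = 0%N by lia.
have [e|lt] : t = t'.+1 \/ (t <= t')%N by lia.
  by rewrite e.
have [h1 h2] := H t' lt (ltnSn _).
rewrite /= dstep_other //; apply: IH => // s a b; apply: H; lia.
Qed.

Lemma pd_P P Q C dl0 g0 t : P t != Q t ->
  (pst P Q C dl0 g0 t.+1).1 (P t) = C t.
Proof. by move=> pq; rewrite /= /dstep (negbTE pq) eqxx. Qed.

Lemma pd_Q P Q C dl0 g0 t : P t != Q t ->
  (pst P Q C dl0 g0 t.+1).1 (Q t) =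
  (pst P Q C dl0 g0 t).1 (P t) + (pst P Q C dl0 g0 t).1 (Q t) - C t.
Proof. by move=> pq; rewrite /= /dstep (negbTE pq) eq_sym (negbTE pq) eqxx. Qed.

Lemma pd_eq P Q C dl0 g0 t : P t = Q t ->
  (pst P Q C dl0 g0 t.+1).1 = (pst P Q C dl0 g0 t).1.
Proof. by move=> pq; rewrite /= /dstep pq eqxx. Qed.

Section P.
Variables (P Q : nat -> nat) (C : nat -> R) (dl0 : nat -> R) (g0 : nat -> V).
Let pd t := (pst P Q C dl0 g0 t).1.
Let pg t := (pst P Q C dl0 g0 t).2.
Hypothesis g0good : gd dl0 g0.
Hypothesis valid : forall t, P t != Q t -> between (pd t (P t)) (C t) (pd t (Q t)).
Hypothesis mono : forall t, (t <= P t)%N /\ (t <= Q t)%N.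
Hypothesis cut : forall k, exists M, (k < M)%N /\ forall t, (P t < M)%N = (Q t < M)%N.

Lemma pst_good t : gd (pd t) (pg t).
Proof.
elim: t => [|t IH] //=.
by apply: (step_good ipL ipC D0 DL EL ES IH) => /valid.
Qed.

Lemma pst_stable i t : (i < t)%N -> pg t i = pg i.+1 i /\ pd t i = pd i.+1 i.
Proof.
elim: t => [//|t IH] lt.
have [e|lt'] : i = t \/ (i < t)%N by lia.
  by rewrite e.
have [h1 h2] := mono t.
have ip_ : i != P t by apply/eqP; lia.
have iq : i != Q t by apply/eqP; lia.
rewrite /pg /pd /= step_other // dstep_other //.
exact: IH.
Qed.

Definition pfin i := pg i.+1 i.

Lemma pfin_on : orthonormal_seq ip pfin.
Proof.
move=> i j; have [h _] := pst_good (maxn i j).+1.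
have li : (i < (maxn i j).+1)%N by rewrite ltnS leq_maxl.
have lj : (j < (maxn i j).+1)%N by rewrite ltnS leq_maxr.
by rewrite /pfin -(pst_stable li).1 -(pst_stable lj).1.
Qed.

Lemma pfin_D i : D (pfin i).
Proof. by have [_ h _] := pst_good i.+1; apply: h. Qed.

Lemma pfin_diag i T : (i < T)%N -> ip (E (pfin i)) (pfin i) = (pd T i)%:C.
Proof.
move=> lt; have [_ _ h] := pst_good i.+1.
by rewrite /pfin h (pst_stable lt).2.
Qed.

Lemma pst_span t i : in_span g0 (pg t i).
Proof.
elim: t i => [|t IH] i; first exact: in_span_gen.
rewrite /pg /=; apply: in_span_trans (step_span _ _ _ _ _ _) => k; exact: IH.
Qed.

Lemma pfin_span i : in_span g0 (pfin i).
Proof. exact: pst_span. Qed.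

Lemma pfin_back k : in_span pfin (g0 k).
Proof.
have [M [kM cM]] := cut k.
suff H : forall t j, (j < M)%N -> spanM M (pg t) (g0 j).
  apply/in_spanE; exists M; apply: spanM_ext (H M k kM) => j jM.
  by rewrite /pfin (pst_stable jM).1.
elim=> [|t IH] j jM; first exact: spanM_gen.
have [pq|pq] := eqVneq (P t) (Q t).
  apply: spanM_ext (IH j jM) => i _; rewrite /pg /= /step pq eqxx //.
have [pM|pM] := boolP (P t < M)%N.
  have qM : (Q t < M)%N by rewrite -cM.
  apply: spanM_trans (IH j jM) => i iM.
  exact: (step_back _ pq (valid pq) pM qM iM).
have qM : ~~ (Q t < M)%N by rewrite -cM.
apply: spanM_ext (IH j jM) => i iM; rewrite /pg /= step_other //; apply/eqP; lia.
Qed.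
Lemma process_thm : exists g' : nat -> V,
  [/\ orthonormal_seq ip g', (forall i, D (g' i)),
     (forall i T, (i < T)%N -> ip (E (g' i)) (g' i) = ((pst P Q C dl0 g0 T).1 i)%:C),
     (forall i, in_span g0 (g' i)) & (forall k, in_span g' (g0 k))].
Proof.
exists pfin; split.
- exact: pfin_on.
- exact: pfin_D.
- exact: pfin_diag.
- exact: pfin_span.
- exact: pfin_back.
Qed.
End P.
End Proc.


Section Arith.
Variables (R : realType) (d lam : nat -> R).
Hypothesis dmono : nondecreasing_seq d.
Hypothesis lmono : nondecreasing_seq lam.
Hypothesis lunb : unbounded_seq lam.
Hypothesis ld : forall i, lam i <= d i.

Definition sgm n := \sum_(i < n) (d i - lam i).
Lemma sgmS n : sgm n.+1 = sgm n + (d n - lam n).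
Proof. by rewrite /sgm big_ord_recr. Qed.
Lemma sgm_mono m n : (m <= n)%N -> sgm m <= sgm n.
Proof.
move=> /subnK <-; elim: (n - m)%N => [|k IH]; first by rewrite add0n.
by rewrite addSn sgmS; apply: le_trans IH _; rewrite lerDl subr_ge0.
Qed.
Lemma sgm_ge0 n : 0 <= sgm n.
Proof. by have := sgm_mono (leq0n n); rewrite /sgm big_ord0. Qed.

Definition nxt (M : R) : nat := ex_minn (lunb M).
Lemma nxtP M : M < lam (nxt M).
Proof. by rewrite /nxt; case: ex_minnP. Qed.

Fixpoint rr (j : nat) : nat :=
  match j with 0 => 0%N | j'.+1 => nxt (lam (rr j') + sgm (rr j').+1) end.
Definition Tc j := sgm (rr j).+1.

Lemma Tc_ge0 j : 0 <= Tc j.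
Proof. exact: sgm_ge0. Qed.

Lemma key j : lam (rr j) + Tc j < lam (rr j.+1).
Proof. exact: nxtP. Qed.

Lemma rr_lt j : (rr j < rr j.+1)%N.
Proof.
rewrite ltnNge; apply/negP => h.
have := key j; have := lmono h; have := Tc_ge0 j; lra.
Qed.

Lemma rr_mono i j : (i < j)%N -> (rr i < rr j)%N.
Proof.
elim: j => [//|j IH]; rewrite ltnS leq_eqVlt => /orP [/eqP ->|h].
  exact: rr_lt.
exact: ltn_trans (IH h) (rr_lt j).
Qed.

Lemma rr_le i j : (rr i <= rr j)%N = (i <= j)%N.
Proof.
apply/idP/idP => h.
  by rewrite leqNgt; apply/negP => /rr_mono; rewrite ltnNge h.
rewrite leq_eqVlt in h; case/orP: h => [/eqP ->//|/rr_mono /ltnW //].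
Qed.

Lemma rr_inj i j : rr i = rr j -> i = j.
Proof. by move=> e; apply/eqP; rewrite eqn_leq -(rr_le i j) -(rr_le j i) e leqnn. Qed.

Lemma rr_ge j : (j <= rr j)%N.
Proof. by elim: j => [//|j IH]; apply: leq_ltn_trans IH (rr_lt j). Qed.

Lemma Tc_mono i j : (i <= j)%N -> Tc i <= Tc j.
Proof. by move=> h; rewrite /Tc; apply: sgm_mono; rewrite ltnS rr_le. Qed.

Lemma bex t : exists j, (t <= rr j)%N.
Proof. by exists t; exact: rr_ge. Qed.
Definition bb t := ex_minn (bex t).
Lemma bb_le t : (t <= rr (bb t))%N.
Proof. by rewrite /bb; case: ex_minnP. Qed.
Lemma bb_min t j : (t <= rr j)%N -> (bb t <= j)%N.
Proof. by rewrite /bb; case: ex_minnP => m _ H /H. Qed.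
Lemma bb_mono s t : (s <= t)%N -> (bb s <= bb t)%N.
Proof. by move=> h; apply: bb_min; apply: leq_trans h (bb_le t). Qed.
Lemma bb_rr j : bb (rr j) = j.
Proof.
apply/eqP; rewrite eqn_leq bb_min //= -rr_le; exact: bb_le.
Qed.
Lemma bb_lt t j : (j < bb t)%N -> (rr j < t)%N.
Proof. by move=> h; rewrite ltnNge; apply/negP => /bb_min; rewrite leqNgt h. Qed.

Definition isr i := rr (bb i) == i.

Lemma isr_rr j : isr (rr j).
Proof. by rewrite /isr bb_rr. Qed.
Lemma rr_isr j i : rr j = i -> isr i.
Proof. by move=> <-; exact: isr_rr. Qed.

Definition Tp j := if j is j'.+1 then Tc j' else 0.

Definition valA i := if isr i then (if odd (bb i) then lam i - Tp (bb i) else lam i + Tc (bb i))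
  else lam i.
Definition valB i := if isr i then lam i + Tc (bb i) - Tp (bb i) else lam i.


Lemma valA_rr j : valA (rr j) = if odd j then lam (rr j) - Tp j else lam (rr j) + Tc j.
Proof. by rewrite /valA isr_rr bb_rr. Qed.
Lemma valB_rr j : valB (rr j) = lam (rr j) + Tc j - Tp j.
Proof. by rewrite /valB isr_rr bb_rr. Qed.
Lemma valA_n i : ~~ isr i -> valA i = lam i.
Proof. by rewrite /valA => /negbTE ->. Qed.
Lemma valB_n i : ~~ isr i -> valB i = lam i.
Proof. by rewrite /valB => /negbTE ->. Qed.
Lemma rr_neq i j : i != j -> rr i != rr j.
Proof. by apply: contra => /eqP /rr_inj ->. Qed.

Variables (V : lmodType R[i]) (ip : V -> V -> R[i]) (E : V -> V).

Definition LP o t := rr (2 * t + o).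
Definition LQ o t := rr (2 * t + o).+1.

Section Layer.
Variables (o : nat) (C : nat -> R) (dl0 : nat -> R) (g0 : nat -> V).
Let pd t := (pst ip E (LP o) (LQ o) C dl0 g0 t).1.

Lemma LPQ_ne t : LP o t != LQ o t.
Proof. by apply: rr_neq; rewrite neq_ltn ltnSn. Qed.

Lemma L_untouched i T : (forall m, (m < T)%N -> i != LP o m /\ i != LQ o m) -> pd T i = dl0 i.
Proof. by move=> H; rewrite /pd (pd_untouched _ _ _ _ _ (leq0n T)) // => s _; apply: H. Qed.

Lemma L1P t : pd t (LP o t) = dl0 (LP o t).
Proof.
apply: L_untouched => m mt; split; apply: rr_neq; apply/eqP; lia.
Qed.
Lemma L1Q t : pd t (LQ o t) = dl0 (LQ o t).
Proof.
apply: L_untouched => m mt; split; apply: rr_neq; apply/eqP; lia.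
Qed.

Lemma L2P t T : (t < T)%N -> pd T (LP o t) = C t.
Proof.
move=> lt; rewrite /pd (pd_untouched _ _ _ _ _ lt); first exact: pd_P (LPQ_ne t).
move=> s h1 h2; split; apply: rr_neq; apply/eqP; lia.
Qed.
Lemma L2Q t T : (t < T)%N -> pd T (LQ o t) = dl0 (LP o t) + dl0 (LQ o t) - C t.
Proof.
move=> lt; rewrite /pd (pd_untouched _ _ _ _ _ lt); last first.
  move=> s h1 h2; split; apply: rr_neq; apply/eqP; lia.
by rewrite pd_Q ?LPQ_ne // -/(pd t) L1P L1Q.
Qed.

Lemma Lmono t : (t <= LP o t)%N /\ (t <= LQ o t)%N.
Proof.
rewrite /LP /LQ; have := rr_ge (2 * t + o); have := rr_ge (2 * t + o).+1; lia.
Qed.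

Lemma Lcut k : exists M, (k < M)%N /\ forall t, (LP o t < M)%N = (LQ o t < M)%N.
Proof.
exists (rr (2 * k + o).+1).+1; split.
  by have := rr_ge (2 * k + o).+1; lia.
move=> t; rewrite /LP /LQ !ltnS !rr_le.
apply/idP/idP; lia.
Qed.

Lemma Lvalid : (forall t, between (dl0 (LP o t)) (C t) (dl0 (LQ o t))) ->
  forall t, LP o t != LQ o t -> between (pd t (LP o t)) (C t) (pd t (LQ o t)).
Proof. by move=> H t _; rewrite L1P L1Q. Qed.
End Layer.

Lemma parity j : exists m, j = (2 * m)%N \/ j = (2 * m).+1.
Proof. exists j./2; have := odd_double_half j; case: (odd j) => h; [right|left]; lia. Qed.

Definition CA t := lam (LP 0 t) + Tc (2 * t).

Lemma A_between t : between (lam (LP 0 t)) (CA t) (lam (LQ 0 t)).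
Proof.
apply/orP; left; rewrite /CA /LQ /LP addn0.
have := key (2 * t); have := Tc_ge0 (2 * t); move=> h1 h2; apply/andP; split; lra.
Qed.

Lemma A_val (g0 : nat -> V) i T : (i < T)%N ->
  (pst ip E (LP 0) (LQ 0) CA lam g0 T).1 i = valA i.
Proof.
move=> iT; case: (boolP (isr i)) => ri; last first.
  rewrite valA_n // L_untouched // => m _; split; apply/negP => /eqP e;
  by move: ri; rewrite e isr_rr.
move: (ri); rewrite /isr => /eqP ei; rewrite -ei.
have jT : (bb i <= i)%N by rewrite -{2}ei rr_ge.
have [m [e|e]] := parity (bb i); rewrite e.
  have -> : rr (2 * m) = LP 0 m by rewrite /LP addn0.
  rewrite L2P; last lia.
  by rewrite /LP addn0 valA_rr /CA /LP addn0 oddM.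
have -> : rr (2 * m).+1 = LQ 0 m by rewrite /LQ addn0.
rewrite L2Q; last lia.
rewrite /LQ /LP addn0 valA_rr /CA /LP addn0 /= oddM /=.
lra.
Qed.

Definition CB t := valA (LP 1 t) + Tc (2 * t).+1.

Lemma B_between t : between (valA (LP 1 t)) (CB t) (valA (LQ 1 t)).
Proof.
apply/orP; left; rewrite /CB /LQ /LP addn1 !valA_rr /= oddM /=.
have := key (2 * t).+1; have := Tc_ge0 (2 * t).+1; have := Tc_ge0 (2 * t).+2.
have := Tc_ge0 (2 * t).
move=> h1 h2 h3 h4; apply/andP; split; lra.
Qed.

Lemma B_val (g0 : nat -> V) i T : (i < T)%N ->
  (pst ip E (LP 1) (LQ 1) CB valA g0 T).1 i = valB i.
Proof.
move=> iT; case: (boolP (isr i)) => ri; last first.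
  rewrite valB_n // L_untouched ?valA_n // => m _; split; apply/negP => /eqP e;
  by move: ri; rewrite e isr_rr.
move: (ri); rewrite /isr => /eqP ei; rewrite -ei.
have jT : (bb i <= i)%N by rewrite -{2}ei rr_ge.
have [m [e|e]] := parity (bb i); rewrite e.
  case: m e => [|m] e.
    rewrite L_untouched; last first.
      move=> k _; split; apply: rr_neq; apply/eqP; lia.
    by rewrite valA_rr valB_rr /= subr0.
  have -> : rr (2 * m.+1) = LQ 1 m by rewrite /LQ; congr rr; lia.
  rewrite L2Q; last lia.
  have e2 : (2 * m.+1)%N = (2 * m).+2 by lia.
  have o1 : odd (2 * m) = false by rewrite oddM.
  rewrite /CB /LQ /LP addn1 (valA_rr (2 * m).+2) valB_rr !oddS o1 /Tp.
  rewrite !negbK; lra.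
have -> : rr (2 * m).+1 = LP 1 m by rewrite /LP addn1.
rewrite L2P; last lia.
have o1 : odd (2 * m) = false by rewrite oddM.
by rewrite /CB /LP addn1 valA_rr valB_rr oddS o1 /Tp /=; lra.
Qed.

Definition IP (t : nat) := t.
Definition IQ t := rr (bb t).
Lemma sgm0 : sgm 0 = 0.
Proof. by rewrite /sgm big_ord0. Qed.

Section Internal.
Variable g0 : nat -> V.
Let pd t := (pst ip E IP IQ d valB g0 t).1.

Lemma I_t t : ~~ isr t -> pd t t = lam t.
Proof.
move=> nr; rewrite /pd (pd_untouched _ _ _ _ _ (leq0n t)) /= ?valB_n //.
move=> s _ st; split; first by rewrite /IP; apply/eqP; lia.
by apply/negP => /eqP e; move: nr; rewrite /IQ e isr_rr.
Qed.

Lemma I1 t : pd t (IQ t) = d (IQ t) + sgm (IQ t) - sgm t.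
Proof.
elim: t => [|t IH].
  have b0 : bb 0 = 0%N by apply/eqP; rewrite -leqn0 bb_min.
  have -> : pd 0 = valB by [].
  rewrite /IQ b0 valB_rr /Tp /Tc sgmS sgm0; lra.
have le1 : (t.+1 <= rr (bb t.+1))%N := bb_le t.+1.
have bm : (bb t <= bb t.+1)%N := bb_mono (leqnSn t).
have [e|ne] := eqVneq (bb t) (bb t.+1).
  have tne : IP t != IQ t by rewrite /IP /IQ e; apply/eqP; lia.
  have nr : ~~ isr t by rewrite /isr eq_sym.
  rewrite {1}/IQ -e -/(IQ t) /pd pd_Q // -/(pd t) IH /IP I_t //.
  rewrite /IQ -e sgmS; lra.
have lt : (bb t < bb t.+1)%N by rewrite ltn_neqAle ne bm.
have tr : t = rr (bb t).
  apply/eqP; rewrite eqn_leq bb_le /= leqNgt; apply/negP => h.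
  by move: lt; rewrite ltnNge (bb_min h).
have jj : bb t.+1 = (bb t).+1.
  apply/eqP; rewrite eqn_leq lt andbT bb_min // {1}tr; exact: rr_lt.
rewrite /pd (pd_untouched _ _ _ _ _ (leq0n t.+1)); last first.
  move=> s _ st; split; first by rewrite /IP /IQ; apply/eqP; lia.
  rewrite /IQ; apply: rr_neq; apply/eqP => e'.
  have := bb_mono (s:=s) (t:=t); rewrite -e'; lia.
have -> : (pst ip E IP IQ d valB g0 0).1 = valB by [].
rewrite /IQ valB_rr jj /Tp /Tc -tr (sgmS (rr (bb t).+1)); lra.
Qed.

Lemma I_valid t : IP t != IQ t -> between (pd t (IP t)) (d t) (pd t (IQ t)).
Proof.
move=> ne; have nr : ~~ isr t by rewrite /isr eq_sym.
rewrite I1 /IP I_t //; apply/orP; left; apply/andP; split; first exact: ld.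
have le := bb_le t.
have := dmono le; have := sgm_mono le; rewrite /IQ; lra.
Qed.

Lemma I_val i T : (i < T)%N -> pd T i = d i.
Proof.
move=> iT; rewrite /pd (pd_untouched _ _ _ _ _ iT); last first.
  move=> s h1 h2; split; rewrite /IP /IQ; apply/eqP; first by lia.
  by have := bb_le s; lia.
have [e|ne] := eqVneq (IP i) (IQ i).
  rewrite pd_eq // -/(pd i).
  have := I1 i; rewrite -e /IP => ->; lra.
by move: (pd_P ip E d valB g0 ne); rewrite /IP.
Qed.

Lemma I_mono t : (t <= IP t)%N /\ (t <= IQ t)%N.
Proof. by split => //; exact: bb_le. Qed.

Lemma I_cut k : exists M, (k < M)%N /\ forall t, (IP t < M)%N = (IQ t < M)%N.
Proof.
exists (rr (bb k)).+1; split; first by rewrite ltnS bb_le.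
move=> t; rewrite /IP /IQ !ltnS rr_le; apply/idP/idP.
  exact: bb_min.
by move=> h; apply: leq_trans (bb_le t) _; rewrite rr_le.
Qed.
End Internal.

Variable (D : V -> Prop).
Hypothesis ipL : forall a x y z, ip (a *: x + y) z = a * ip x z + ip y z.
Hypothesis ipC : forall x y, ip x y = Num.conj (ip y x).
Hypothesis D0 : D 0.
Hypothesis DL : forall a x y, D x -> D y -> D (a *: x + y).
Hypothesis EL : forall a x y, D x -> D y -> E (a *: x + y) = a *: E x + E y.
Hypothesis ES : forall f g, D f -> D g -> ip (E f) g = ip f (E g).
Variable f : nat -> V.
Hypothesis fon : orthonormal_seq ip f.
Hypothesis fD : forall i, D (f i).
Hypothesis fdiag : forall i, ip (E (f i)) (f i) = (lam i)%:C.

Lemma main_res : exists e : nat -> V,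
    [/\ orthonormal_seq ip e,
        (forall i : nat, in_span f (e i)),
        (forall x : V, in_cspan ip e x <-> in_cspan ip f x)
      & (forall i : nat, ip (E (e i)) (e i) = (d i)%:C)].
Proof.
have gf : good ip D E lam f by split.
have [gA [onA DA diagA spA bkA]] := process_thm ipL ipC D0 DL EL ES (P:=LP 0) (Q:=LQ 0) (C:=CA)
  gf (Lvalid f A_between) (Lmono 0) (Lcut 0).
have gAg : good ip D E valA gA.
  by split => // i; rewrite (diagA i i.+1) // A_val.
have [gB [onB DB diagB spB bkB]] := process_thm ipL ipC D0 DL EL ES (P:=LP 1) (Q:=LQ 1) (C:=CB)
  gAg (Lvalid gA B_between) (Lmono 1) (Lcut 1).
have gBg : good ip D E valB gB.
  by split => // i; rewrite (diagB i i.+1) // B_val.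
have [e [onE DE diagE spE bkE]] := process_thm ipL ipC D0 DL EL ES (P:=IP) (Q:=IQ) (C:=d)
  gBg (@I_valid gB) I_mono I_cut.
have sp i : in_span f (e i).
  apply: in_span_trans (spE i) => k; apply: in_span_trans (spB k) => k'; exact: spA.
have bk k : in_span e (f k).
  apply: in_span_trans (bkA k) => k1; apply: in_span_trans (bkB k1) => k2; exact: bkE.
have eqv y : in_span e y <-> in_span f y.
  by split => h; [apply: in_span_trans h | apply: in_span_trans h].
exists e; split => //.
  move=> x; split => H eps he; have [y [hy hn]] := H eps he; exists y; split => //;
  by apply/eqv.
by move=> i; rewrite (diagE i i.+1) // I_val.
Qed.

End Arith.


Theorem lemma4p1 (R : realType) (V : lmodType R[i]) (ip : V -> V -> R[i])
  (D : V -> Prop) (E : V -> V) (d lam : nat -> R) (f : nat -> V) :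
  is_hilbert ip ->
  dense_subspace ip D ->
  symmetric_operator ip D E ->
  nondecreasing_seq d -> unbounded_seq d ->
  nondecreasing_seq lam -> unbounded_seq lam ->
  (forall i : nat, lam i <= d i) ->
  orthonormal_seq ip f ->
  (forall i : nat, D (f i)) ->
  (forall i : nat, ip (E (f i)) (f i) = (lam i)%:C) ->
  exists e : nat -> V,
    [/\ orthonormal_seq ip e,
        (forall i : nat, in_span f (e i)),
        (forall x : V, in_cspan ip e x <-> in_cspan ip f x)
      & (forall i : nat, ip (E (e i)) (e i) = (d i)%:C)].
Proof.
move=> [ipL ipC _ _ _] [D0 DL _] [EL ES] dmono _ lmono lunb ld fon fD fdiag.
exact: (main_res dmono lmono lunb ld ipL ipC D0 DL EL ES fon fD fdiag).
Qed.
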